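(* Let $G$ be the corresponding graph of an array $A$ with $n$ elements and reach one, and let $F$ be a resulting DFS forest of $G$. Merge the sub-trees of $F$, then apply the merge step to the resulting graph with the list of roots of $F$ (in some order); let $H$ be the resulting graph and $R$ the returned root list. Run DFS on $H$ with visiting list $R$, and let $F'$ be the resulting DFS forest. Then all components of $F'$ are directed paths.
   Context: An array is a finite sequence $A=(A[1],\dots,A[n])$ of pairwise distinct real numbers. A comparison graph on $A$ is a directed graph on $\{1,\dots,n\}$ all of whose arcs $(u,v)$ satisfy $A[u]<A[v]$. The corresponding graph of $A$ with reach one has an arc $(i,j)$ whenever $j\equiv i\pm1\pmod n$, $j\ne i$, and $A[i]<A[j]$. Components are connected components of the underlying undirected graph. DFS: adjacency lists sorted in increasing $A$-value; given a visiting list $(l_1,\dots,l_m)$ (for $F$, some ordering of all vertices), for each unvisited $l_t$ call Visit$(l_t)$, where Visit$(u)$ marks $u$ and, for each out-neighbour $w$ of $u$ in increasing $A$-value that is unvisited, sets parent$(w)=u$ and calls Visit$(w)$. The resulting DFS forest has arcs $(\mathrm{parent}(w),w)$; its roots are the vertices without parent. Merging the sub-trees of $F$: for each component of $F$ whose root has exactly two children $a_1,b_1$, set $p=a_1,q=b_1$ and, while both are defined: if $A[p]<A[q]$ add $(p,q)$ and replace $p$ by its smallest-valued child in $F$ (undefined if none); else add $(q,p)$ and replace $q$ likewise. Component merge of components $C,D$: set $p,q$ to the minimum-valued vertices of $C,D$; while both defined: if $A[p]<A[q]$ add $(p,q)$ and replace $p$ by the smallest-valued out-neighbour of $p$ within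 $C$ (ignoring arcs added in this merge; undefined if none); else add $(q,p)$ and replace $q$ analogously in $D$. Merge step with root list $(\rho_1,\dots,\rho_k)$ (the minimum-valued vertices of the components): component-merge the components of $\rho_{2j-1},\rho_{2j}$ for $j=1,\dots,\lfloor k/2\rfloor$ and return the list obtained by deleting the larger-valued root of each merged pair. *)

(* Defs.v *)
From HB Require Import structures.
From mathcomp Require Import all_boot all_order all_algebra.
From mathcomp Require Import reals.
Set Implicit Arguments. Unset Strict Implicit. Unset Printing Implicit Defensive.
Import Order.TTheory GRing.Theory Num.Theory.
Local Open Scope ring_scope.

Section Alg.
Variables (R : realType) (n : nat) (A : 'I_n -> R).

(* A directed graph on vertices 'I_n (vertex i+1 of the paper is i here),
   given by its set of arcs. *)
Definition graph := {set 'I_n * 'I_n}.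

Definition corr_graph : graph :=
  [set e : 'I_n * 'I_n |
     [&& ((val e.2 == (val e.1).+1 %% n)%N || (val e.1 == (val e.2).+1 %% n)%N),
         e.2 != e.1 & A e.1 < A e.2]].

Definition outs (g : graph) (u : 'I_n) : seq 'I_n :=
  sort (fun x y => A x <= A y) [seq w <- enum 'I_n | (u, w) \in g].

(* DFS state: (visited vertices, arcs (parent(w), w) of the forest so far) *)
Definition dfs_state := ({set 'I_n} * graph)%type.

(* Visit(u), with fuel bounding the recursion depth (n.+1 is ample). *)
Fixpoint visit (g : graph) (k : nat) (u : 'I_n) (st : dfs_state) : dfs_state :=
  match k with
  | 0 => st
  | k'.+1 =>
      foldl (fun (st : dfs_state) (w : 'I_n) => if w \in st.1 then st
                         else visit g k' w (st.1, (u, w) |: st.2))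
            (u |: st.1, st.2) (outs g u)
  end.

Definition dfs_forest (g : graph) (vis : seq 'I_n) : graph :=
  (foldl (fun (st : dfs_state) (l : 'I_n) => if l \in st.1 then st else visit g n.+1 l st)
         ((set0, set0) : dfs_state) vis).2.

Definition forest_roots (f : graph) : {set 'I_n} :=
  [set v | [forall u, (u, v) \notin f]].

Definition ucomp (g : graph) (x : 'I_n) : {set 'I_n} :=
  [set y | connect (fun a b => ((a, b) \in g) || ((b, a) \in g)) x y].

(* The common "while both p and q are defined" loop: if A p < A q add (p,q)
   and advance p by np, else add (q,p) and advance q by nq. Fuel k. *)
Fixpoint zip_merge (k : nat) (np nq : 'I_n -> option 'I_n)
    (p q : 'I_n) (acc : graph) : graph :=
  match k with
  | 0 => acc
  | k'.+1 =>
      if A p < A q then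
        let acc' := (p, q) |: acc in
        match np p with Some p' => zip_merge k' np nq p' q acc' | None => acc' end
      else
        let acc' := (q, p) |: acc in
        match nq q with Some q' => zip_merge k' np nq p q' acc' | None => acc' end
  end.

Definition first_child (f : graph) (p : 'I_n) : option 'I_n := ohead (outs f p).

Definition merge_subtrees (f : graph) : graph :=
  f :|: \bigcup_(r | (r \in forest_roots f) && (size (outs f r) == 2%N))
          zip_merge n.+1 (first_child f) (first_child f)
                    (nth r (outs f r) 0) (nth r (outs f r) 1) set0.

(* a minimum-valued vertex of C (d is a default, unused when C is nonempty) *)
Definition minv (C : {set 'I_n}) (d : 'I_n) : 'I_n :=
  odflt d [pick x in C | [forall y in C, A x <= A y]].

(* Component merge of C and D in graph g (neighbours are taken in g, i.e.
   ignoring the arcs added by this merge). *)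
Definition comp_merge (g : graph) (C D : {set 'I_n}) (d : 'I_n) : graph :=
  g :|: zip_merge n.+1
          (fun p => ohead [seq w <- outs g p | w \in C])
          (fun q => ohead [seq w <- outs g q | w \in D])
          (minv C d) (minv D d) set0.

Fixpoint merge_step (g : graph) (rs : seq 'I_n) : graph * seq 'I_n :=
  match rs with
  | r1 :: r2 :: rest =>
      let g' := comp_merge g (ucomp g r1) (ucomp g r2) r1 in
      let res := merge_step g' rest in
      (res.1, (if A r1 < A r2 then r1 else r2) :: res.2)
  | _ => (g, rs)
  end.

End Alg.

Definition is_dpath (n : nat) (g : graph n) (C : {set 'I_n}) : Prop :=
  exists s : seq 'I_n,
    [/\ uniq s, C = [set x in s] &
        forall x y, x \in C -> y \in C -> ((x, y) \in g) = ((x, y) \in zip s (behead s))].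

(* Main.v *)
Require Import Defs.
From HB Require Import structures.
From mathcomp Require Import all_boot all_order all_algebra.
From mathcomp Require Import reals.
From mathcomp Require Import zify.
Set Implicit Arguments. Unset Strict Implicit. Unset Printing Implicit Defensive.
Import Order.TTheory GRing.Theory Num.Theory.
Local Open Scope ring_scope.

Section P1.
Variables (R : realType) (n : nat) (A : 'I_n -> R).
Hypothesis Ainj : injective A.

Definition rk (x : 'I_n) : nat := #|[set y | A y < A x]|.
Lemma rk_lt x y : A y < A x -> (rk y < rk x)%N.
Proof.
move=> lt; apply: proper_card; apply/properP; split.
  apply/subsetP=> z; rewrite !inE => h; exact: lt_trans h lt.
by exists y; rewrite !inE ?lt ?ltxx.
Qed.

Lemma A_ind (P : 'I_n -> Prop) :
  (forall x, (forall y, A y < A x -> P y) -> P x) -> forall x, P x.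
Proof.
move=> IH x.
have [k] := ubnP (rk x); elim: k x => // k IHk x lek.
apply: IH => y lt; apply: IHk; exact: leq_trans (rk_lt lt) _.
Qed.

Definition adj (K : {set 'I_n}) x y : bool :=
  [&& x \in K, y \in K, A x < A y &
      [forall z, (z \in K) ==> ~~ ((A x < A z) && (A z < A y))]].

Lemma adjP (K : {set 'I_n}) x y : reflect [/\ x \in K, y \in K, A x < A y &
   forall z, z \in K -> ~~ ((A x < A z) && (A z < A y))] (adj K x y).
Proof.
apply: (iffP and4P) => [[-> -> -> /forallP H]|[-> -> -> H]]; split=> //.
- by move=> z zK; have := H z; rewrite zK.
- by apply/forallP => z; apply/implyP; apply: H.
Qed.

Lemma adj_sub (K K' : {set 'I_n}) x y : {subset K <= K'} -> x \in K -> y \in K ->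
  adj K' x y -> adj K x y.
Proof.
move=> sub xK yK /adjP[_ _ lt H]; apply/adjP; split=> // z zK; exact: H (sub _ zK).
Qed.

Lemma A_lt_neq x y : A x < A y -> x != y.
Proof. by apply: contraTneq => ->; rewrite ltxx. Qed.

Lemma A_le_lt x y : x != y -> A x <= A y -> A x < A y.
Proof.
move=> ne le; rewrite lt_neqAle le andbT; apply: contra ne => /eqP h.
by apply/eqP; apply: Ainj.
Qed.

Lemma adj_uniq (K : {set 'I_n}) x y y' : adj K x y -> adj K x y' -> y = y'.
Proof.
move=> /adjP[xK yK lt H] /adjP[_ yK' lt' H'].
case: (ltgtP (A y) (A y')) => [h|h|/Ainj //].
- by have := H' y yK; rewrite lt h.
- by have := H y' yK'; rewrite lt' h.
Qed.

Lemma adj_uniql (K : {set 'I_n}) x x' y : adj K x y -> adj K x' y -> x = x'.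
Proof.
move=> /adjP[xK yK lt H] /adjP[xK' _ lt' H'].
case: (ltgtP (A x) (A x')) => [h|h|/Ainj //].
- by have := H x' xK'; rewrite lt' h.
- by have := H' x xK; rewrite lt h.
Qed.

Lemma succ_ex (K : {set 'I_n}) x z : x \in K -> z \in K -> A x < A z -> exists y, adj K x y.
Proof.
move=> xK; elim/A_ind: z => z IH zK lt.
case: (boolP (adj K x z)) => [h|]; first by exists z.
rewrite {1}/adj xK zK lt /= => /forallPn[w]; rewrite negb_imply negbK.
case/andP=> wK /andP[h1 h2]; exact: IH h2 wK h1.
Qed.

Lemma min_ex (K : {set 'I_n}) z : z \in K ->
  exists2 m, m \in K & forall y, y \in K -> A m <= A y.
Proof.
elim/A_ind: z => z IH zK.
case: (boolP [forall y, (y \in K) ==> (A z <= A y)]) => [/forallP h|].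
  by exists z => // y yK; have := h y; rewrite yK.
case/forallPn => w; rewrite negb_imply -ltNge => /andP[wK lt]; exact: IH lt wK.
Qed.

Definition ur (g : graph n) : rel 'I_n := fun a b => ((a, b) \in g) || ((b, a) \in g).

Lemma ur_sym (g : graph n) : symmetric (ur g).
Proof. by move=> a b; rewrite /ur orbC. Qed.

Lemma in_ucomp (g : graph n) x y : (y \in ucomp g x) = connect (ur g) x y.
Proof. by rewrite inE. Qed.

Lemma ucomp_refl (g : graph n) x : x \in ucomp g x.
Proof. by rewrite in_ucomp connect0. Qed.

Lemma ucomp_sym (g : graph n) x y : (y \in ucomp g x) = (x \in ucomp g y).
Proof. by rewrite !in_ucomp (sym_connect_sym (ur_sym g)). Qed.

Lemma ucomp_eq (g : graph n) x y : y \in ucomp g x -> ucomp g y = ucomp g x.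
Proof.
rewrite in_ucomp => h; apply/setP => z; rewrite !in_ucomp; apply/idP/idP => h2.
  exact: connect_trans h h2.
by apply: connect_trans h2; rewrite (sym_connect_sym (ur_sym g)).
Qed.

Lemma ucomp_arc (g : graph n) u v : (u, v) \in g -> v \in ucomp g u.
Proof. by move=> h; rewrite in_ucomp connect1 // /ur h. Qed.

Lemma ucomp_arc' (g : graph n) u v : (u, v) \in g -> u \in ucomp g v.
Proof. by move=> h; rewrite ucomp_sym ucomp_arc. Qed.

Lemma ucomp_char (g : graph n) (P : 'I_n -> {set 'I_n}) :
  (forall y, y \in P y) -> (forall y z, z \in P y -> P z = P y) ->
  (forall u v, (u, v) \in g -> v \in P u) ->
  (forall y z, z \in P y -> connect (ur g) y z) ->
  forall y, ucomp g y = P y.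
Proof.
move=> Pr Pe Parc Pc y; apply/setP => z; rewrite in_ucomp; apply/idP/idP; last exact: Pc.
have key : forall a b, b \in P a -> (a \in P y) = (b \in P y).
  move=> a b bP; apply/idP/idP => h.
    by rewrite -(Pe y a h).
  by rewrite -(Pe y b h) (Pe a b bP).
have cl : closed (ur g) (mem (P y)).
  move=> a b /orP[] h; first exact: key (Parc _ _ h).
  by rewrite /= (key _ _ (Parc _ _ h)).
move=> c; have := closed_connect cl c; by rewrite /= Pr => <-.
Qed.

Lemma ucomp_mono (g g' : graph n) x : g \subset g' -> ucomp g x \subset ucomp g' x.
Proof.
move=> sub; apply/subsetP => y; rewrite !in_ucomp; apply: connect_sub => a b.
by case/orP => h; apply: connect1; rewrite /ur (subsetP sub _ h) ?orbT.
Qed.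

Definition leA : rel 'I_n := fun x y => A x <= A y.
Definition ltA : rel 'I_n := fun x y => A x < A y.
Definition srt (K : {set 'I_n}) := sort leA (enum K).

Lemma leA_total : total leA.
Proof. by move=> x y; rewrite /leA le_total. Qed.
Lemma leA_trans : transitive leA.
Proof. by move=> x y z; rewrite /leA; apply: le_trans. Qed.
Lemma ltA_trans : transitive ltA.
Proof. by move=> x y z; rewrite /ltA; apply: lt_trans. Qed.

Lemma mem_srt (K : {set 'I_n}) x : (x \in srt K) = (x \in K).
Proof. by rewrite mem_sort mem_enum. Qed.

Lemma srt_uniq (K : {set 'I_n}) : uniq (srt K).
Proof. by rewrite sort_uniq enum_uniq. Qed.

Lemma srt_sorted (K : {set 'I_n}) : sorted ltA (srt K).
Proof.
have h := sort_sorted leA_total (enum K).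
have h1 : sorted <=%O (map A (srt K)) by rewrite sorted_map.
have h2 : sorted <%O (map A (srt K)).
  by rewrite lt_sorted_uniq_le h1 andbT (map_inj_uniq Ainj) srt_uniq.
rewrite sorted_map in h2; exact: h2.
Qed.

Lemma set_srt (K : {set 'I_n}) : [set x in srt K] = K.
Proof. by apply/setP => x; rewrite inE mem_srt. Qed.

Lemma zip_adj s : sorted ltA s ->
  forall x y, ((x, y) \in zip s (behead s)) = adj [set z in s] x y.
Proof.
elim: s => [|h t IH] /=.
  by move=> _ x y; rewrite /adj inE.
case: t IH => [|h' t'] IH /=.
  move=> _ x y; rewrite in_nil; apply/esym/adjP => -[]; rewrite !inE.
  by move=> /eqP -> /eqP ->; rewrite ltxx.
move=> s0; have allh := order_path_min ltA_trans (s0 : path ltA h (h' :: t')).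
move: s0 => /andP[hh' st]; have IH' := IH st.
have allt : all (ltA h') t' by apply: order_path_min ltA_trans _.
move: allh => /= /andP[_ allh].
move=> x y; rewrite in_cons IH' xpair_eqE.
apply/idP/idP.
  case/orP => [/andP[/eqP -> /eqP ->]|].
    apply/adjP; split; rewrite ?inE ?eqxx ?orbT //.
    move=> z; rewrite !inE => /orP[/eqP ->|/orP[/eqP ->|zt]].
    - by rewrite ltxx.
    - by rewrite ltxx andbF.
    - by move/allP: allt => /(_ _ zt); rewrite /ltA => /lt_gtF ->; rewrite andbF.
  move/adjP => [xK yK lt H]; move: xK yK; rewrite !inE => xK yK.
  apply/adjP; split; rewrite ?inE ?xK ?yK ?orbT //.
  move=> z; rewrite inE in_cons => /orP[/eqP ->|zK]; last by apply: H; rewrite inE.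
  have : ltA h x.
    by move: xK => /orP[/eqP ->//|xt]; move/allP: allh => /(_ _ xt).
  by rewrite /ltA => /lt_gtF ->.
move/adjP => [xK yK lt H]; move: xK; rewrite inE in_cons => /orP[/eqP xh|xK'].
  subst x; move: yK; rewrite inE in_cons => /orP[/eqP yh|].
    by subst y; rewrite ltxx in lt.
  rewrite in_cons => /orP[/eqP ->|yt]; first by rewrite !eqxx.
  have := H h'; rewrite inE !in_cons eqxx orbT => /(_ isT).
  by move/allP: allt => /(_ _ yt); rewrite /ltA => ->; move: hh'; rewrite /ltA => ->.
apply/orP; right; apply/adjP; split; rewrite ?inE //.
- move: yK; rewrite inE in_cons => /orP[/eqP yh|//].
  subst y; have : ltA h x.
    by move: xK' => /orP[/eqP ->//|xt]; move/allP: allh => /(_ _ xt).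
  by rewrite /ltA => /lt_gtF; rewrite lt.
- by move=> z; rewrite inE => zK; apply: H; rewrite inE in_cons zK orbT.
Qed.



Definition np_ok (np : 'I_n -> option 'I_n) (S : {set 'I_n}) :=
  forall x, x \in S -> (forall y, np x = Some y -> adj S x y) /\
                       (np x = None -> forall z, z \in S -> A z <= A x).

Definition cross (S1 S2 : {set 'I_n}) x y :=
  ((x \in S1) && (y \in S2)) || ((x \in S2) && (y \in S1)).

Lemma crossC (S1 S2 : {set 'I_n}) x y : cross S1 S2 x y = cross S2 S1 x y.
Proof. by rewrite /cross orbC. Qed.

Definition tl (S : {set 'I_n}) p := [set z in S | A p <= A z].
Lemma in_tl (S : {set 'I_n}) p z : (z \in tl S p) = (z \in S) && (A p <= A z).
Proof. by rewrite inE. Qed.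

Lemma zm_sub k np nq p q (acc : graph n) : acc \subset zip_merge A k np nq p q acc.
Proof.
elim: k p q acc => [|k IH] p q acc /=; first exact: subxx.
case: ifP => _.
  case: (np p) => [p'|]; last exact: subsetU1.
  exact: subset_trans (subsetU1 _ _) (IH _ _ _).
case: (nq q) => [q'|]; last exact: subsetU1.
exact: subset_trans (subsetU1 _ _) (IH _ _ _).
Qed.

Lemma zm_first k np nq p q (acc : graph n) : (0 < k)%N ->
  ((p, q) \in zip_merge A k np nq p q acc) || ((q, p) \in zip_merge A k np nq p q acc).
Proof.
case: k => // k _ /=; case: ifP => _.
  apply/orP; left; case: (np p) => [p'|]; last by rewrite setU11.
  by apply: (subsetP (zm_sub _ _ _ _ _ _)); rewrite setU11.
apply/orP; right; case: (nq q) => [q'|]; last by rewrite setU11.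
by apply: (subsetP (zm_sub _ _ _ _ _ _)); rewrite setU11.
Qed.

Lemma zm_bound (S1 S2 : {set 'I_n}) k np nq p q (acc : graph n) :
  (forall x, x \in S1 -> x \notin S2) -> np_ok np S1 -> np_ok nq S2 ->
  p \in S1 -> q \in S2 ->
  forall e, e \in zip_merge A k np nq p q acc ->
    e \in acc \/ (cross S1 S2 e.1 e.2 /\ A e.1 < A e.2).
Proof.
move=> dis okp okq; elim: k p q acc => [|k IH] p q acc pS qS e /=; first by left.
case: ifP => hpq.
  have H1 : forall e, e \in (p, q) |: acc -> e \in acc \/ (cross S1 S2 e.1 e.2 /\ A e.1 < A e.2).
    move=> e'; rewrite in_setU1 => /orP[/eqP -> /=|]; last by left.
    by right; rewrite /cross pS qS.
  case E: (np p) => [p'|]; last exact: H1.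
  have p'S : p' \in S1 by have [h _] := okp p pS; have /and4P[] := h _ E.
  by move=> /(IH _ _ _ p'S qS) [/H1|]; [|right].
have H1 : forall e, e \in (q, p) |: acc -> e \in acc \/ (cross S1 S2 e.1 e.2 /\ A e.1 < A e.2).
  move=> e'; rewrite in_setU1 => /orP[/eqP -> /=|]; last by left.
  right; rewrite /cross pS qS orbT; split => //.
  have ne : q != p by apply: contraTneq qS => ->; exact: dis.
  by apply: A_le_lt => //; rewrite leNgt hpq.
case E: (nq q) => [q'|]; last exact: H1.
have q'S : q' \in S2 by have [h _] := okq q qS; have /and4P[] := h _ E.
by move=> /(IH _ _ _ pS q'S) [/H1|]; [|right].
Qed.

Lemma zm_step (S1 S2 : {set 'I_n}) np p q :
  (forall x, x \in S1 -> x \notin S2) -> np_ok np S1 -> p \in S1 -> q \in S2 ->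
  A p < A q ->
  forall x y, cross S1 S2 x y -> adj (tl S1 p :|: tl S2 q) x y ->
   (x = p /\ y = q) \/ (exists2 p', np p = Some p' & adj (tl S1 p' :|: tl S2 q) x y).
Proof.
move=> dis okp pS qS hpq.
have dis' : forall x, x \in S2 -> x \notin S1.
  by move=> z zS; apply: contraTN zS => /dis.
have Tmin : forall z, z \in tl S1 p :|: tl S2 q -> A p <= A z.
  move=> z; rewrite !inE => /orP[/andP[_ //]|/andP[_ h]].
  exact: le_trans (ltW hpq) h.
move=> x y cr a; have /adjP[xT yT lt H] := a.
case: (eqVneq x p) => [xp|xnp].
  left; subst x; split => //.
  have yS : y \in S2 by move: cr; rewrite /cross pS (negbTE (dis _ pS)) /= orbF.
  case: (eqVneq y q) => [//|ynq].
  have qy : A q < A y.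
    move: yT; rewrite !inE (negbTE (dis' _ yS)) yS /= => h.
    by apply: A_le_lt h; rewrite eq_sym.
  by have := H q; rewrite !inE qS le_refl orbT hpq qy => /(_ isT).
right.
have px : A p < A x by apply: A_le_lt; [rewrite eq_sym|apply: Tmin].
have [okp1 okp2] := okp p pS.
case E: (np p) => [p'|].
  have /adjP[_ p'S pp' Hp] := okp1 _ E.
  exists p' => //.
  have sub : {subset tl S1 p' :|: tl S2 q <= tl S1 p :|: tl S2 q}.
    move=> z; rewrite !inE => /orP[/andP[-> h]|->]; last by rewrite orbT.
    by rewrite (le_trans (ltW pp') h).
  have inT' : forall z, z \in tl S1 p :|: tl S2 q -> A p < A z -> z \in tl S1 p' :|: tl S2 q.
    move=> z; rewrite !inE => /orP[/andP[zS _] pz|->]; last by rewrite orbT.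
    rewrite zS /= leNgt; apply/orP; left; apply/negP => zp'.
    by have := Hp z zS; rewrite pz zp'.
  apply: adj_sub a; [exact: sub|exact: inT'|apply: inT' => //; exact: lt_trans lt].
have := okp2 E.
have [u uS pu] : exists2 u, u \in S1 & A p < A u.
  case/orP: cr => /andP[h1 h2]; first by exists x.
  by exists y => //; exact: lt_trans lt.
by move=> /(_ u uS); rewrite leNgt pu.
Qed.

Lemma zm_card (S1 S2 : {set 'I_n}) np p q p' :
  (forall x, x \in S1 -> x \notin S2) -> np_ok np S1 -> p \in S1 ->
  np p = Some p' -> (#|tl S1 p' :|: tl S2 q| < #|tl S1 p :|: tl S2 q|)%N.
Proof.
move=> dis okp pS E; have [okp1 _] := okp p pS.
have /adjP[_ p'S pp' _] := okp1 _ E.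
apply: proper_card; apply/properP; split.
  apply/subsetP => z; rewrite !inE => /orP[/andP[-> h]|->]; last by rewrite orbT.
  by rewrite (le_trans (ltW pp') h).
exists p; first by rewrite !inE pS le_refl.
by rewrite !inE (negbTE (dis _ pS)) pS /= orbF -ltNge.
Qed.

Lemma zm_main (S1 S2 : {set 'I_n}) k np nq p q (acc : graph n) :
  (forall x, x \in S1 -> x \notin S2) -> np_ok np S1 -> np_ok nq S2 ->
  p \in S1 -> q \in S2 -> (#|tl S1 p :|: tl S2 q| <= k)%N ->
  forall x y, cross S1 S2 x y -> adj (tl S1 p :|: tl S2 q) x y ->
  (x, y) \in zip_merge A k np nq p q acc.
Proof.
move=> dis okp okq.
have dis' : forall x, x \in S2 -> x \notin S1.
  by move=> z zS; apply: contraTN zS => /dis.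
elim: k p q acc => [|k IH] p q acc pS qS hk x y cr a.
  have : (0 < #|tl S1 p :|: tl S2 q|)%N.
    by apply/card_gt0P; exists p; rewrite !inE pS le_refl.
  by rewrite leqn0 in hk; rewrite (eqP hk).
rewrite /=; case: ifP => hpq.
  have [[-> ->]|[p' E a']] := zm_step dis okp pS qS hpq cr a.
    case: (np p) => [p'|]; last by rewrite setU11.
    by apply: (subsetP (zm_sub _ _ _ _ _ _)); rewrite setU11.
  rewrite E; apply: IH => //.
    by have [h _] := okp p pS; have /and4P[] := h _ E.
  by have := zm_card q dis okp pS E; move=> h; exact: leq_trans h hk.
have hqp : A q < A p.
  have ne : q != p by apply: contraTneq qS => ->; exact: dis.
  by apply: A_le_lt => //; rewrite leNgt hpq.
rewrite crossC in cr; rewrite setUC in a.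
have [[-> ->]|[q' E a']] := zm_step dis' okq qS pS hqp cr a.
  case: (nq q) => [q'|]; last by rewrite setU11.
  by apply: (subsetP (zm_sub _ _ _ _ _ _)); rewrite setU11.
rewrite E; apply: IH => //.
- by have [h _] := okq q qS; have /and4P[] := h _ E.
- by have := zm_card p dis' okq qS E; rewrite setUC [tl S2 q :|: _]setUC => h;
     exact: leq_trans h hk.
- by rewrite crossC.
- by rewrite setUC.
Qed.

Definition nice (g : graph n) :=
  (forall u v, (u, v) \in g -> A u < A v) /\
  (forall x y, adj (ucomp g x) x y -> (x, y) \in g).

Lemma foldl_skip (X : dfs_state n -> 'I_n -> dfs_state n) s (st : dfs_state n) :
  all (fun w => w \in st.1) s ->
  foldl (fun (st : dfs_state n) (w : 'I_n) => if w \in st.1 then st else X st w) st s = st.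
Proof. by elim: s => //= w s IH /andP[-> h]; exact: IH. Qed.

Lemma mem_outs (g : graph n) u w : (w \in outs A g u) = ((u, w) \in g).
Proof. by rewrite mem_sort mem_filter mem_enum andbT. Qed.

Lemma outs_sorted (g : graph n) u : sorted leA (outs A g u).
Proof. exact: (@sort_sorted _ leA leA_total _). Qed.

Lemma visit_nice (g : graph n) k v (vis : {set 'I_n}) (arcs : graph n) :
  nice g ->
  (forall z, z \in ucomp g v -> (z \in vis) = (A z < A v)) ->
  (#|tl (ucomp g v) v| <= k)%N ->
  visit A g k v (vis, arcs) =
  (vis :|: tl (ucomp g v) v,
   arcs :|: [set e | (A v <= A e.1) && adj (ucomp g v) e.1 e.2]).
Proof.
move=> [ginc gadj].
elim: k v vis arcs => [|k IH] v vis arcs hvis hk.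
  have : (0 < #|tl (ucomp g v) v|)%N.
    by apply/card_gt0P; exists v; rewrite in_tl ucomp_refl le_refl.
  by rewrite leqn0 in hk; rewrite (eqP hk).
set K := ucomp g v.
have vK : v \in K by exact: ucomp_refl.
have outK : forall w, w \in outs A g v -> (w \in K) && (A v < A w).
  by move=> w; rewrite mem_outs => h; rewrite ucomp_arc // ginc.
rewrite /=.
case: (boolP [exists w, adj K v w]) => [/existsP[w a]|/existsPn nos].
  have vwg : (v, w) \in g by exact: gadj.
  have /adjP[_ wK vw Hw] := a.
  have wmin : forall u, u \in outs A g v -> A w <= A u.
    move=> u /outK /andP[uK vu]; rewrite leNgt; apply/negP => uw.
    by have := Hw u uK; rewrite vu uw.
  have [rest Eo] : exists rest, outs A g v = w :: rest.
    case E: (outs A g v) => [|h rest].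
      by have := mem_outs g v w; rewrite E vwg in_nil.
    exists rest; congr (_ :: _); apply: Ainj; apply: le_anti.
    have hw : A h <= A w.
      have : w \in h :: rest by rewrite -E mem_outs.
      rewrite in_cons => /orP[/eqP -> //|wr].
      have := outs_sorted g v; rewrite E => /(order_path_min leA_trans).
      by move/allP/(_ _ wr).
    by rewrite hw wmin // E mem_head.
  have Kw : ucomp g w = K by apply: ucomp_eq.
  rewrite Eo /=.
  have wnv : w \notin v |: vis.
    by rewrite in_setU1 negb_or eq_sym (A_lt_neq vw) hvis // ltNge (ltW vw).
  have hk' : (#|tl (ucomp g w) w| <= k)%N.
    rewrite Kw -ltnS; apply: leq_trans _ hk; apply: proper_card; apply/properP; split.
      by apply/subsetP => z; rewrite !in_tl => /andP[-> h]; rewrite (le_trans (ltW vw) h).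
    by exists v; rewrite in_tl vK //= -ltNge.
  have hv' : forall z, z \in ucomp g w -> (z \in v |: vis) = (A z < A w).
    rewrite Kw => z zK; rewrite in_setU1 hvis //.
    case: (eqVneq z v) => [->|zv] /=; first by rewrite vw.
    apply/idP/idP => h; first exact: lt_trans h vw.
    rewrite ltNge; apply/negP => vz.
    by have := Hw z zK; rewrite h (A_le_lt _ vz) // eq_sym.
  rewrite (negbTE wnv) (IH _ _ _ hv' hk').
  rewrite Kw foldl_skip; last first.
    apply/allP => u ur /=; rewrite in_setU in_tl.
    have uo : u \in outs A g v by rewrite Eo in_cons ur orbT.
    by have /andP[-> _] := outK u uo; rewrite wmin ?orbT.
  congr (_, _); apply/setP => z.
    rewrite !in_setU in_set1 !in_tl.
    case: (eqVneq z v) => [->|zv] /=; first by rewrite vK le_refl !orbT.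
    case zK: (z \in K) => //=.
    congr (_ || _); apply/idP/idP => h; first exact: le_trans (ltW vw) h.
    rewrite leNgt; apply/negP => zw.
    by have := Hw z zK; rewrite zw (A_le_lt _ h) // eq_sym.
  rewrite !in_setU in_set1 !in_set.
  case: (eqVneq z (v, w)) => [->|zvw] /=; first by rewrite le_refl a !orbT.
  congr (_ || _); apply/idP/idP => /andP[h1 h2]; rewrite h2 andbT.
    exact: le_trans (ltW vw) h1.
  case: (eqVneq z.1 v) => [e1|ne].
    move: zvw h1 h2 e1; case: z => x y /= ne _ h2 e1; subst x.
    by rewrite (adj_uniq h2 a) eqxx in ne.
  have /adjP[xK _ _ _] := h2.
  rewrite leNgt; apply/negP => zw.
  by have := Hw _ xK; rewrite zw (A_le_lt _ h1) // eq_sym.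
have nobig : forall z, z \in K -> A z <= A v.
  move=> z zK; rewrite leNgt; apply/negP => vz.
  by have [w a] := succ_ex vK zK vz; have := nos w; rewrite a.
have -> : outs A g v = [::].
  case E: (outs A g v) => [|w s] //.
  have := outK w; rewrite E in_cons eqxx => /(_ isT) /andP[wK vw].
  by have := nobig w wK; rewrite leNgt vw.
rewrite /=; congr (_, _); apply/setP => z.
  rewrite in_setU1 in_setU in_tl.
  case: (eqVneq z v) => [->|zv] /=; first by rewrite vK le_refl orbT.
  case zK: (z \in K) => /=; last by rewrite orbF.
  have h := nobig z zK.
  by rewrite leNgt (A_le_lt zv h) orbF.
rewrite in_setU in_set.
case: (boolP (adj K z.1 z.2)) => [h|]; last by rewrite andbF orbF.
have /adjP[xK _ _ _] := h.
case: (eqVneq z.1 v) => [e|ne].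
  by have := nos z.2; rewrite -e h.
by rewrite leNgt (A_le_lt ne (nobig _ xK)) orbF.
Qed.

Definition rs_ok (g : graph n) (rs : seq 'I_n) :=
  [/\ uniq rs, (forall r, r \in rs -> forall z, z \in ucomp g r -> A r <= A z) &
      (forall r1 r2, r1 \in rs -> r2 \in rs -> r2 \in ucomp g r1 -> r1 = r2)].

Definition covered (g : graph n) (rs : seq 'I_n) y := has (fun r => y \in ucomp g r) rs.

Definition stP (g : graph n) (P : seq 'I_n) : dfs_state n :=
  ([set z | covered g P z], [set e | covered g P e.1 && adj (ucomp g e.1) e.1 e.2]).

Definition Fstep (g : graph n) := 
  fun (st : dfs_state n) (l : 'I_n) => if l \in st.1 then st else visit A g n.+1 l st.
Arguments Fstep : simpl never.

Lemma fold_nice (g : graph n) P s : nice g -> rs_ok g (P ++ s) ->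
  foldl (Fstep g) (stP g P) s = stP g (P ++ s).
Proof.
move=> gn; elim: s P => [|r s IH] P; first by rewrite cats0.
move=> [u mn ds] /=.
have rin : r \in P ++ r :: s by rewrite mem_cat mem_head orbT.
have covr : forall z, z \in ucomp g r -> covered g P z = false.
  move=> z zK; apply/negbTE/hasPn => r' r'P; apply/negP => zr'.
  have e : r = r'.
    apply: ds => //; first by rewrite mem_cat r'P.
    by rewrite -(ucomp_eq zK) ucomp_sym.
  move: u; rewrite cat_uniq => /and3P[_ /hasPn /(_ r) + _].
  by rewrite mem_head => /(_ isT); rewrite e r'P.
rewrite /=.
have -> : Fstep g (stP g P) r = visit A g n.+1 r (stP g P).
  by rewrite /Fstep /stP /= in_set covr ?ucomp_refl.
rewrite /stP visit_nice //; first last.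
- by rewrite (leq_trans (max_card _)) // card_ord.
- by move=> z zK; rewrite in_set covr // ltNge mn.
rewrite -cat_rcons -cats1 -/(stP g ((P ++ [:: r]) ++ s)) -IH; last first.
  by split; rewrite -catA.
congr (foldl _ _ s); rewrite /stP; congr (_, _); apply/setP => z; rewrite !in_setU !in_set /covered has_cat /= orbF.
  by rewrite -in_ucomp; case zK: (z \in ucomp g r) => //=; rewrite mn.
case: (boolP (z.1 \in ucomp g r)) => zK.
  rewrite orbT (ucomp_eq zK) mn //=.
  by case: (adj _ _ _); rewrite ?andbF ?andbT ?orbT.
rewrite orbF; case: (boolP (adj (ucomp g r) z.1 z.2)) => [/adjP[h] |_].
  by rewrite h in zK.
by rewrite andbF orbF.
Qed.

Lemma dfs_nice (g : graph n) rs : nice g -> rs_ok g rs -> (forall y, covered g rs y) ->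
  dfs_forest A g rs = [set e | adj (ucomp g e.1) e.1 e.2].
Proof.
move=> gn ok cov.
have E : ((set0, set0) : dfs_state n) = stP g [::].
  by rewrite /stP; congr (_, _); apply/setP => z; rewrite !in_set.
change ((foldl (Fstep g) ((set0, set0) : dfs_state n) rs).2 = [set e | adj (ucomp g e.1) e.1 e.2]).
rewrite E fold_nice //= /stP /=.
by apply/setP => e; rewrite !in_set cov.
Qed.

Lemma path_connect (e : rel 'I_n) s c : (forall a b, (a, b) \in zip s (behead s) -> e a b) ->
  c \in s -> connect e (head c s) c.
Proof.
elim: s => [|h t IH] //= he; rewrite in_cons => /orP[/eqP ->|ct]; first exact: connect0.
case: t IH he ct => [|h' t'] // IH he ct.
apply: connect_trans (connect1 (he h h' _)) _; first by rewrite in_cons eqxx.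
by apply: IH => // a b ab; apply: he; rewrite in_cons ab orbT.
Qed.

Lemma dpath_nice (H : graph n) x : nice H ->
  is_dpath [set e | adj (ucomp H e.1) e.1 e.2] (ucomp [set e | adj (ucomp H e.1) e.1 e.2] x).
Proof.
move=> Hn; set F' := [set e | adj (ucomp H e.1) e.1 e.2].
have zipF : forall y a b, (a, b) \in zip (srt (ucomp H y)) (behead (srt (ucomp H y))) ->
    (a, b) \in F'.
  move=> y a b; rewrite zip_adj ?srt_sorted // set_srt => h.
  have /adjP[aK _ _ _] := h.
  by rewrite in_set /= (ucomp_eq aK).
have UE : forall y, ucomp F' y = ucomp H y.
  apply: ucomp_char.
  - exact: ucomp_refl.
  - exact: ucomp_eq.
  - by move=> u v; rewrite in_set => /adjP[].
  move=> y z zK.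
  set s := srt (ucomp H y).
  have sym := sym_connect_sym (ur_sym F').
  have c1 : forall c, c \in s -> connect (ur F') (head c s) c.
    move=> c cs; apply: path_connect cs => a b ab.
    by rewrite /ur (zipF y a b ab).
  have ys : y \in s by rewrite mem_srt ucomp_refl.
  have zs : z \in s by rewrite mem_srt.
  have hh : head y s = head z s by case: (s) ys => //.
  apply: connect_trans (c1 z zs); rewrite sym -hh; exact: c1.
exists (srt (ucomp H x)); split.
- exact: srt_uniq.
- by rewrite UE set_srt.
- move=> a b; rewrite UE => aK bK.
  rewrite zip_adj ?srt_sorted // set_srt in_set /= (ucomp_eq aK).
  done.
Qed.

Lemma ohead_sorted (l : seq 'I_n) y : ohead l = Some y -> sorted leA l ->
  y \in l /\ (forall u, u \in l -> A y <= A u).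
Proof.
case: l => //= h t [<-] st; split; first exact: mem_head.
move=> u; rewrite in_cons => /orP[/eqP -> //|ut].
by have := order_path_min leA_trans st => /allP /(_ _ ut).
Qed.

Lemma np_ok_comp (g : graph n) r : nice g ->
  np_ok (fun p => ohead [seq w <- outs A g p | w \in ucomp g r]) (ucomp g r).
Proof.
move=> [ginc gadj] x xC; set C := ucomp g r.
have Cx : ucomp g x = C by exact: ucomp_eq.
have sl : sorted leA [seq w <- outs A g x | w \in C].
  exact: (sorted_filter leA_trans _ (outs_sorted g x)).
split.
  move=> y E; have [yl ymin] := ohead_sorted E sl.
  move: (yl); rewrite mem_filter mem_outs => /andP[yC xy].
  apply/adjP; split => //; first exact: ginc.
  move=> z zC; apply/negP => /andP[xz zy].
  have [w a] := succ_ex xC zC xz.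
  have /adjP[_ wC xw Hw] := a.
  have wl : w \in [seq w <- outs A g x | w \in C].
    by rewrite mem_filter wC mem_outs gadj // Cx.
  have yw := ymin w wl.
  have wz : A w <= A z.
    rewrite leNgt; apply/negP => zw; by have := Hw z zC; rewrite xz zw.
  by have := lt_le_trans zy (le_trans yw wz); rewrite ltxx.
move=> E z zC; rewrite leNgt; apply/negP => xz.
have [w a] := succ_ex xC zC xz.
have /adjP[_ wC xw Hw] := a.
have : w \in [seq w <- outs A g x | w \in C].
  by rewrite mem_filter wC mem_outs gadj // Cx.
by case: [seq w <- outs A g x | w \in C] E.
Qed.

Lemma minv_eq (C : {set 'I_n}) d r : r \in C -> (forall z, z \in C -> A r <= A z) ->
  minv A C d = r.
Proof.
move=> rC rmin; rewrite /minv; case: pickP => [x /andP[xC /forallP h]|].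
  apply: Ainj; apply: le_anti; rewrite rmin // andbT.
  by have := h r; rewrite rC.
move/(_ r); rewrite rC /=; case: forallP => // [[]] z.
by apply/implyP; apply: rmin.
Qed.

Lemma comp_merge_ok (g : graph n) r1 r2 : nice g ->
  (forall z, z \in ucomp g r1 -> A r1 <= A z) ->
  (forall z, z \in ucomp g r2 -> A r2 <= A z) ->
  r2 \notin ucomp g r1 ->
  nice (comp_merge A g (ucomp g r1) (ucomp g r2) r1) /\
  forall y, ucomp (comp_merge A g (ucomp g r1) (ucomp g r2) r1) y =
     if y \in ucomp g r1 :|: ucomp g r2 then ucomp g r1 :|: ucomp g r2 else ucomp g y.
Proof.
move=> gn m1 m2 r21.
have [ginc gadj] := gn.
set C := ucomp g r1; set D := ucomp g r2.
have r1C : r1 \in C by exact: ucomp_refl.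
have r2D : r2 \in D by exact: ucomp_refl.
have dis : forall x, x \in C -> x \notin D.
  move=> x xC; apply/negP => xD.
  by move: r21; rewrite /C -(ucomp_eq xC) (ucomp_eq xD) ucomp_refl.
have okC := np_ok_comp (r:=r1) gn; have okD := np_ok_comp (r:=r2) gn.
rewrite /comp_merge (minv_eq r1 r1C m1) (minv_eq r1 r2D m2).
set Z := zip_merge A n.+1 _ _ r1 r2 set0.
have Zb : forall e, e \in Z -> cross C D e.1 e.2 /\ A e.1 < A e.2.
  move=> e eZ; have := zm_bound dis okC okD r1C r2D eZ.
  by rewrite in_set0 => -[].
have Z12 : ((r1, r2) \in Z) || ((r2, r1) \in Z) by apply: zm_first.
have TCD : tl C r1 :|: tl D r2 = C :|: D.
  apply/setP => z; rewrite !in_setU !in_tl.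
  by case zC: (z \in C); case zD: (z \in D); rewrite /= ?m1 ?m2.
have Zm : forall x y, cross C D x y -> adj (C :|: D) x y -> (x, y) \in Z.
  move=> x y cr a; rewrite /Z.
  have h := @zm_main C D n.+1 _ _ r1 r2 set0 dis okC okD r1C r2D.
  rewrite TCD in h; apply: h => //.
  by rewrite (leq_trans (max_card _)) // card_ord.
set g' := g :|: Z.
have sub : g \subset g' by exact: subsetUl.
have CDeq : forall y, y \in C :|: D -> ucomp g y = C \/ ucomp g y = D.
  by move=> y; rewrite in_setU => /orP[yC|yD]; [left|right]; apply: ucomp_eq.
have conn : forall w, w \in C :|: D -> connect (ur g') r1 w.
  have gsub := fun x => subsetP (ucomp_mono x sub).
  move=> w; rewrite in_setU => /orP[wC|wD].
    by have := gsub _ _ wC; rewrite in_ucomp.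
  have c12 : connect (ur g') r1 r2.
    apply: connect1; rewrite /ur !in_setU.
    by case/orP: Z12 => ->; rewrite !orbT.
  apply: connect_trans c12 _; by have := gsub _ _ wD; rewrite in_ucomp.
have UE : forall y, ucomp g' y = if y \in C :|: D then C :|: D else ucomp g y.
  apply: ucomp_char.
  - by move=> y; case: ifP => // _; exact: ucomp_refl.
  - move=> y z; case: ifP => yCD zP.
      by rewrite zP.
    case: ifP => zCD //; last by apply: ucomp_eq.
    have yz : y \in ucomp g z by rewrite ucomp_sym.
    by have [E|E] := CDeq _ zCD; rewrite E in yz; rewrite in_setU yz ?orbT in yCD.
  - move=> u v; rewrite in_setU => /orP[uv|uvZ].
      case: ifP => uCD; last exact: ucomp_arc.
      have [E|E] := CDeq _ uCD; have := ucomp_arc uv; rewrite E in_setU => ->; rewrite ?orbT //.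
    have [cr _] := Zb _ uvZ; move: cr; rewrite /cross /= => cr.
    have uCD : u \in C :|: D by rewrite in_setU; case/orP: cr => /andP[-> _]; rewrite ?orbT.
    have vCD : v \in C :|: D by rewrite in_setU; case/orP: cr => /andP[_ ->]; rewrite ?orbT.
    by rewrite uCD.
  - move=> y z; case: ifP => yCD zP.
      have sym := sym_connect_sym (ur_sym g').
      by apply: connect_trans (conn _ zP); rewrite sym; apply: conn.
    by have := subsetP (ucomp_mono y sub) z zP; rewrite in_ucomp.
split => //; split.
  move=> u v; rewrite in_setU => /orP[]; first exact: ginc.
  by move/Zb => [].
move=> x y; rewrite UE; case: ifP => xCD a; last by rewrite in_setU gadj.
rewrite in_setU; have /adjP[_ yCD _ _] := a.
case: (boolP (cross C D x y)) => cr; first by rewrite Zm ?orbT.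
apply/orP; left; apply: gadj.
move: xCD yCD cr; rewrite !in_setU /cross.
case xC: (x \in C) => /=.
  case yD: (y \in D) => //= _ yC _.
  rewrite (ucomp_eq xC); apply: adj_sub a; [|exact: xC|by move: yC; rewrite orbF].
  by move=> z zC; rewrite in_setU zC.
move=> xD; rewrite xD /= => /orP[yC|yD] ncr; first by rewrite yC in ncr.
rewrite (ucomp_eq xD); apply: adj_sub a; [|exact: xD|exact: yD].
by move=> z zD; rewrite in_setU zD orbT.
Qed.

Lemma merge_step_ok (g : graph n) rs : nice g -> rs_ok g rs ->
  [/\ nice (merge_step A g rs).1, rs_ok (merge_step A g rs).1 (merge_step A g rs).2,
      (forall y, covered g rs y = covered (merge_step A g rs).1 (merge_step A g rs).2 y),
      (forall y, ~~ covered g rs y -> ucomp (merge_step A g rs).1 y = ucomp g y) &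
      {subset (merge_step A g rs).2 <= rs}].
Proof.
have [k] := ubnP (size rs); elim: k rs g => // k IH.
case=> [|r1 [|r2 rest]] g hk gn ok; try by split.
have [u mn ds] := ok.
have r21 : r2 \notin ucomp g r1.
  apply/negP => h; have e := ds r1 r2 (mem_head _ _) _ h.
  have : r2 \in r1 :: r2 :: rest by rewrite !in_cons eqxx orbT.
  by move=> /e {}e; move: u; rewrite e /= in_cons eqxx.
have r2rs : r2 \in r1 :: r2 :: rest by rewrite !in_cons eqxx orbT.
have [n' UE] := comp_merge_ok gn (mn r1 (mem_head _ _)) (mn r2 r2rs) r21.
set C := ucomp g r1 in n' UE *; set D := ucomp g r2 in n' UE *.
set g' := comp_merge A g C D r1 in n' UE *.
move: u => /= /andP[]; rewrite in_cons negb_or => /andP[r12 r1r] /andP[r2r urest].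
have inrs : forall r, r \in rest -> r \in r1 :: r2 :: rest.
  by move=> r rr; rewrite !in_cons rr !orbT.
have restCD : forall r y, r \in rest -> y \in C :|: D -> y \notin ucomp g r.
  move=> r y rr yCD; apply/negP => yr.
  have := ucomp_eq yr; rewrite in_setU in yCD.
  case/orP: yCD => yc; rewrite (ucomp_eq yc) => E.
    have := ds r1 r (mem_head _ _) (inrs _ rr); rewrite E ucomp_refl => /(_ isT) e.
    by rewrite e rr in r1r.
  have := ds r2 r r2rs (inrs _ rr); rewrite E ucomp_refl.
  by move=> /(_ isT) e; rewrite e rr in r2r.
have rnCD : forall r, r \in rest -> r \notin C :|: D.
  by move=> r rr; apply/negP => h; have := restCD r r rr h; rewrite ucomp_refl.
have Ur : forall r, r \in rest -> ucomp g' r = ucomp g r.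
  by move=> r rr; rewrite UE (negbTE (rnCD r rr)).
have cov' : forall y, covered g' rest y = covered g rest y.
  by move=> y; apply: eq_in_has => r rr /=; rewrite Ur.
have ok' : rs_ok g' rest.
  split => //.
    by move=> r rr z; rewrite Ur //; apply: mn; apply: inrs.
  by move=> a b ar br; rewrite Ur //; apply: ds; apply: inrs.
have hk' : (size rest < k)%N by rewrite /= !ltnS in hk; exact: leq_trans hk.
have [nH okH covH untH subH] := IH rest g' hk' n' ok'.
rewrite /=; set H := (merge_step A g' rest).1 in nH okH covH untH subH *.
set R' := (merge_step A g' rest).2 in okH covH untH subH *.
set r1' := if A r1 < A r2 then r1 else r2.
have r1'CD : r1' \in C :|: D by rewrite /r1' in_setU; case: ifP; rewrite ucomp_refl ?orbT.
have ncov : ~~ covered g' rest r1'.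
  by rewrite cov'; apply/hasPn => r rr; apply: restCD.
have UH : ucomp H r1' = C :|: D by rewrite untH // UE r1'CD.
have r1'rest : r1' \notin rest.
  by rewrite /r1'; case: ifP.
have [uR' mnR' dsR'] := okH.
split => //.
- split.
  + by rewrite /= uR' andbT; apply: contra r1'rest; apply: subH.
  + move=> r; rewrite in_cons => /orP[/eqP ->|rR]; last exact: mnR'.
    rewrite UH => z; rewrite in_setU => /orP[zC|zD].
      have := mn r1 (mem_head _ _) z zC; rewrite /r1'; case: ifP => // h1 h2.
      by apply: le_trans h2; rewrite leNgt h1.
    have := mn r2 r2rs z zD; rewrite /r1'; case: ifP => // h1 h2.
    exact: le_trans (ltW h1) h2.
  + have key : forall b, b \in R' -> b \notin ucomp H r1'.
      by move=> b bR; rewrite UH; apply: rnCD; apply: subH.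
    move=> a b; rewrite !in_cons => /orP[/eqP ->|aR] /orP[/eqP ->|bR] //.
    * by move=> h; have := key b bR; rewrite h.
    * by rewrite ucomp_sym => h; have := key a aR; rewrite h.
    * exact: dsR'.
- move=> y; rewrite UH -covH cov' in_setU -orbA //.
- move=> y; rewrite !negb_or => /and3P[yC yD ycov].
  rewrite untH ?cov' // UE in_setU.
  by rewrite (negbTE yC) (negbTE yD).
- move=> r; rewrite in_cons => /orP[/eqP ->|rR]; last by apply: inrs; apply: subH.
  by rewrite /r1'; case: ifP; rewrite !in_cons eqxx ?orbT.
Qed.

Definition dinv (g : graph n) (st : dfs_state n) (P : pred 'I_n) :=
  [/\ st.2 \subset g, (forall a b, (a, b) \in st.2 -> (b \in st.1) || P b) &
      (forall a a' b, (a, b) \in st.2 -> (a', b) \in st.2 -> a = a')].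

Lemma card_step (S S' : {set 'I_n}) u k : u \notin S -> u |: S \subset S' ->
  (#|~: S| <= k.+1)%N -> (#|~: S'| <= k)%N.
Proof.
move=> uS sub hk.
have h1 := cardsC S; have h2 := cardsC S'; have h3 := cardsU1 u S.
have h4 := subset_leq_card sub.
rewrite uS in h3; lia.
Qed.

Lemma visit_inv (g : graph n) k u (st : dfs_state n) :
  dinv g st (pred1 u) -> u \notin st.1 -> (#|~: st.1| <= k)%N ->
  dinv g (visit A g k u st) pred0 /\ u |: st.1 \subset (visit A g k u st).1.
Proof.
elim: k u st => [|k IH] u st inv ust hk.
  have : (0 < #|~: st.1|)%N by apply/card_gt0P; exists u; rewrite inE.
  by rewrite leqn0 in hk; rewrite (eqP hk).
rewrite /=.
have : all (fun w => (u, w) \in g) (outs A g u) by apply/allP => w; rewrite mem_outs.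
have : dinv g (u |: st.1, st.2) pred0 /\ u |: st.1 \subset (u |: st.1, st.2).1.
  have [s1 s2 s3] := inv; split => //; split => //= a b ab.
  by rewrite in_setU1 orbF orbC; apply: s2 ab.
elim: (outs A g u) (u |: st.1, st.2) => [|w s IHs] st0 /= [inv0 sub0] //.
case/andP => uw alls; apply: IHs => //.
case: ifP => wst //.
have [s1 s2 s3] := inv0.
have inv1 : dinv g (st0.1, (u, w) |: st0.2) (pred1 w).
  split => /=.
  - by apply/subsetP => e; rewrite in_setU1 => /orP[/eqP ->//|]; apply: (subsetP s1).
  - move=> a b; rewrite in_setU1 => /orP[/eqP [_ ->]|ab]; first by rewrite eqxx orbT.
    by have := s2 _ _ ab; rewrite orbF => ->.
  - move=> a a' b; rewrite !in_setU1 => h1 h2.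
    case: (eqVneq b w) => [bw|bnw].
      subst b.
      have f : forall x, ((x, w) == (u, w)) || ((x, w) \in st0.2) -> x = u.
        move=> x /orP[/eqP [->] //|xw]; by have := s2 _ _ xw; rewrite orbF wst.
      by rewrite (f _ h1) (f _ h2).
    by move: h1 h2; rewrite !xpair_eqE (negbTE bnw) !andbF /=; exact: s3.
have [inv2 sub2] := IH w _ inv1 (negbT wst) (card_step ust sub0 hk).
split => //; apply: subset_trans sub0 _; apply: subset_trans _ sub2.
exact: subsetU1.
Qed.

Lemma dfs_inv (g : graph n) vis : dinv g ((foldl (Fstep g) ((set0, set0) : dfs_state n) vis)) pred0.
Proof.
have : dinv g ((set0, set0) : dfs_state n) pred0.
  by split => //=; [exact: sub0set|move=> a b; rewrite in_set0|move=> a a' b; rewrite in_set0].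
elim: vis ((set0, set0) : dfs_state n) => [|l s IH] st //= inv.
apply: IH; rewrite /Fstep; case: ifP => // lst.
have inv' : dinv g st (pred1 l).
  by have [s1 s2 s3] := inv; split => // a b ab; have := s2 _ _ ab; rewrite orbF => ->.
have hk : (#|~: st.1| <= n.+1)%N by rewrite (leq_trans (max_card _)) // card_ord.
by have [] := visit_inv inv' (negbT lst) hk.
Qed.

Lemma dfs_prop (g : graph n) vis :
  dfs_forest A g vis \subset g /\
  (forall a a' b, (a, b) \in dfs_forest A g vis -> (a', b) \in dfs_forest A g vis -> a = a').
Proof.
have [s1 _ s3] := dfs_inv g vis.
by split; [exact: s1|exact: s3].
Qed.

Section Forest.
Variable f : graph n.
Hypothesis finc : forall u v, (u, v) \in f -> A u < A v.
Hypothesis find : forall a a' b, (a, b) \in f -> (a', b) \in f -> a = a'.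
Hypothesis fout : forall u w c1 c2, (u, w) \in f -> (w, c1) \in f -> (w, c2) \in f -> c1 = c2.

Definition dF : rel 'I_n := fun x y => (x, y) \in f.
Definition reach a := [set y | connect dF a y].

Lemma in_reach a y : (y \in reach a) = connect dF a y.
Proof. by rewrite inE. Qed.

Lemma rootP r : reflect (forall u, (u, r) \notin f) (r \in forest_roots f).
Proof. by rewrite inE; apply: (iffP forallP). Qed.

Lemma conn_le a y : connect dF a y -> A a <= A y.
Proof.
move/connectP => [p pth ->]; elim: p a pth => [|b p IH] a /=; first by rewrite le_refl.
by case/andP => ab pth; exact: le_trans (ltW (finc ab)) (IH b pth).
Qed.

Lemma conn_last a y : connect dF a y -> y != a -> exists2 p, connect dF a p & (p, y) \in f.
Proof.
move/connectP => [s pth ->]; case/lastP: s pth => [|s b] /=; first by rewrite eqxx.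
rewrite rcons_path last_rcons => /andP[pth ab] _; exists (last a s) => //.
by apply/connectP; exists s.
Qed.

Lemma conn_first a y : connect dF a y -> y != a -> exists2 c, (a, c) \in f & connect dF c y.
Proof.
move/connectP => [[|c s] /= pth ->]; first by rewrite eqxx.
case/andP: pth => ac pth _; exists c => //; by apply/connectP; exists s.
Qed.

Lemma arc_conn a b : (a, b) \in f -> connect dF a b.
Proof. by move=> h; apply: connect1. Qed.

Lemma reach_ucomp a y : y \in reach a -> y \in ucomp f a.
Proof.
rewrite in_reach in_ucomp; apply: connect_sub => x z h.
by apply: connect1; apply/orP; left; exact: h.
Qed.

Lemma root_reach r : r \in forest_roots f -> {subset ucomp f r <= reach r}.
Proof.
move=> /rootP rt z; rewrite in_ucomp.
have cl : closed (ur f) (mem (reach r)).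
  have key : forall y z, (y, z) \in f -> (y \in reach r) = (z \in reach r).
    move=> y z' yz; rewrite !in_reach; apply/idP/idP => h.
      exact: connect_trans h (arc_conn yz).
    have zr : z' != r by apply: contraTneq yz => ->; apply: rt.
    have [p rp pz] := conn_last h zr.
    by rewrite (find yz pz).
  move=> y z' /orP[] h; first exact: key.
  by rewrite /= (key _ _ h).
move=> c; have := closed_connect cl c.
by rewrite /= in_reach connect0 => <-.
Qed.

Lemma root_min r z : r \in forest_roots f -> z \in ucomp f r -> A r <= A z.
Proof. by move=> rt /(root_reach rt); rewrite in_reach; apply: conn_le. Qed.

Lemma root_uniq r1 r2 : r1 \in forest_roots f -> r2 \in forest_roots f ->
  r2 \in ucomp f r1 -> r1 = r2.
Proof.
move=> rt1 /rootP rt2 /(root_reach rt1); rewrite in_reach => c.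
case: (eqVneq r2 r1) => // ne.
by have [p _ pr] := conn_last c ne; have := rt2 p; rewrite pr.
Qed.

Lemma root_ex y : exists2 r, r \in forest_roots f & y \in ucomp f r.
Proof.
elim/A_ind: y => y IH.
case: (boolP (y \in forest_roots f)) => [yr|]; first by exists y => //; exact: ucomp_refl.
rewrite inE => /forallPn [p]; rewrite negbK => py.
have [r rt pr] := IH p (finc py).
exists r => //; rewrite -(ucomp_eq pr); exact: ucomp_arc.
Qed.

Definition nonroot a := exists u, (u, a) \in f.

Lemma reach_total a y z : nonroot a -> connect dF a y -> connect dF a z ->
  connect dF y z || connect dF z y.
Proof.
move=> na /connectP [p pth ->]; elim: p a na pth z => [|c p IH] a na /= pth z az.
  by rewrite az.
case/andP: pth => ac pth; case: (eqVneq z a) => [->|za].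
  by apply/orP; right; apply/connectP; exists (c :: p) => //=; rewrite ac pth.
have [c' ac' c'z] := conn_first az za.
case: na => u ua; have e := fout ua ac' ac; subst c'.
by apply: IH => //; exists a.
Qed.

Lemma reach_nonroot a y : nonroot a -> y \in reach a -> nonroot y.
Proof.
move=> na; rewrite in_reach => c; case: (eqVneq y a) => [->//|ne].
by have [p _ py] := conn_last c ne; exists p.
Qed.

Lemma reach_child a x c : nonroot a -> x \in reach a -> (x, c) \in f -> adj (reach a) x c.
Proof.
move=> na xr xc; apply/adjP; split => //.
- by move: xr; rewrite !in_reach => h; exact: connect_trans h (arc_conn xc).
- exact: finc.
move=> z zr; apply/negP => /andP[xz zc].
move: (xr) (zr); rewrite !in_reach => xr' zr'.
case/orP: (reach_total na xr' zr') => h.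
  have zx : z != x by apply: contraTneq xz => ->; rewrite ltxx.
  have [c' xc' c'z] := conn_first h zx.
  have [u ux] := reach_nonroot na xr.
  have e := fout ux xc' xc; subst c'.
  by have := conn_le c'z; rewrite leNgt zc.
by have := conn_le h; rewrite leNgt xz.
Qed.

Lemma reach_leaf a x : nonroot a -> x \in reach a -> (forall c, (x, c) \notin f) ->
  forall z, z \in reach a -> A z <= A x.
Proof.
move=> na xr nc z zr; move: (xr) (zr); rewrite !in_reach => xr' zr'.
case/orP: (reach_total na xr' zr') => h; last exact: conn_le.
case: (eqVneq z x) => [->//|zx].
by have [c' xc' _] := conn_first h zx; have := nc c'; rewrite xc'.
Qed.

Lemma np_ok_reach a : nonroot a -> np_ok (first_child A f) (reach a).
Proof.
move=> na x xr; rewrite /first_child; split.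
  move=> y; case E: (outs A f x) => [|h t] //= [<-].
  apply: reach_child => //; rewrite -mem_outs E mem_head //.
case E: (outs A f x) => [|h t] //= _.
apply: reach_leaf => // c; by rewrite -mem_outs E.
Qed.

Lemma root_decomp r z : r \in forest_roots f -> z \in ucomp f r ->
  z = r \/ exists2 c, (r, c) \in f & z \in reach c.
Proof.
move=> rt /(root_reach rt); rewrite in_reach => c.
case: (eqVneq z r) => [->|ne]; [by left|right].
have [c' rc' c'z] := conn_first c ne; exists c' => //; by rewrite in_reach.
Qed.

Lemma child_reach_ucomp r c y : (r, c) \in f -> y \in reach c -> y \in ucomp f r.
Proof.
move=> rc /reach_ucomp; rewrite -(ucomp_eq (ucomp_arc rc)) //.
Qed.

Lemma reach_disj_aux r a b : (r, a) \in f -> (r, b) \in f -> a \in reach b -> a = b.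
Proof.
move=> ra rb; rewrite in_reach => c; case: (eqVneq a b) => // ne.
have [p bp pa] := conn_last c ne; have e := find pa ra; subst p.
by have := conn_le bp; rewrite leNgt finc.
Qed.

Lemma reach_disj r a b z : (r, a) \in f -> (r, b) \in f -> a != b ->
  z \in reach a -> z \notin reach b.
Proof.
move=> ra rb ne; elim/A_ind: z => z IH za; apply/negP => zb.
case: (eqVneq z a) => [e|za'].
  by subst z; move: ne; rewrite (reach_disj_aux ra rb zb) eqxx.
case: (eqVneq z b) => [e|zb'].
  by subst z; move: ne; rewrite (reach_disj_aux rb ra za) eqxx.
move: (za) (zb); rewrite !in_reach => za2 zb2.
have [p1 ap1 p1z] := conn_last za2 za'.
have [p2 bp2 p2z] := conn_last zb2 zb'.
have e := find p1z p2z; subst p2.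
by have := IH p1 (finc p1z); rewrite !in_reach ap1 bp2 => /(_ isT).
Qed.


Hypothesis fout2 : forall r, (size (outs A f r) <= 2)%N.

Definition Zr r := zip_merge A n.+1 (first_child A f) (first_child A f)
                    (nth r (outs A f r) 0) (nth r (outs A f r) 1) set0.

Lemma outs_uniq r : uniq (outs A f r).
Proof. by rewrite sort_uniq filter_uniq // enum_uniq. Qed.

Lemma two_children r : (size (outs A f r) == 2)%N ->
  exists a b, [/\ outs A f r = [:: a; b], (r, a) \in f, (r, b) \in f & a != b].
Proof.
have u := outs_uniq r.
case E: (outs A f r) u => [|a [|b [|d t]]] //= u _.
exists a, b; split => //; try by rewrite -mem_outs E !in_cons eqxx ?orbT.
by move: u; rewrite in_cons negb_or => /andP[/andP[]].
Qed.

Lemma Zr_prop r : r \in forest_roots f -> (size (outs A f r) == 2)%N ->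
  exists a b, [/\ outs A f r = [:: a; b], (r, a) \in f, (r, b) \in f, a != b &
    (forall e, e \in Zr r -> cross (reach a) (reach b) e.1 e.2 /\ A e.1 < A e.2) /\
    (forall x y, cross (reach a) (reach b) x y -> adj (reach a :|: reach b) x y ->
       (x, y) \in Zr r)].
Proof.
move=> rt s2; have [a [b [E ra rb ab]]] := two_children s2.
have dis : forall z, z \in reach a -> z \notin reach b.
  by move=> z za; apply: (reach_disj ra rb ab za).
have oka : np_ok (first_child A f) (reach a) by apply: np_ok_reach; exists r.
have okb : np_ok (first_child A f) (reach b) by apply: np_ok_reach; exists r.
have aa : a \in reach a by rewrite in_reach connect0.
have bb : b \in reach b by rewrite in_reach connect0.
exists a, b; split => //; split.
- move=> e; rewrite /Zr E => eZ.
  by have := zm_bound dis oka okb aa bb eZ; rewrite in_set0 => -[].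
- move=> x y cr a'; rewrite /Zr E.
  have tla : forall c, tl (reach c) c = reach c.
    move=> c; apply/setP => z; rewrite in_tl; case zr: (z \in reach c) => //=.
    by apply: conn_le; rewrite -in_reach.
  have hk : (#|tl (reach a) a :|: tl (reach b) b| <= n.+1)%N.
    by rewrite (leq_trans (max_card _)) // card_ord.
  have h := @zm_main _ _ n.+1 _ _ _ _ set0 dis oka okb aa bb hk x y cr.
  rewrite !tla in h; exact: (h a').
Qed.

Definition Mf := merge_subtrees A f.

Lemma Mf_ucomp y : ucomp Mf y = ucomp f y.
Proof.
move: y; apply: ucomp_char.
- exact: ucomp_refl.
- exact: ucomp_eq.
- move=> u v; rewrite /Mf /merge_subtrees in_setU => /orP[uv|].
    exact: ucomp_arc.
  case/bigcupP => r /andP[rt s2] uvZ.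
  have [a [b [_ ra rb _ [Zb _]]]] := Zr_prop rt s2.
  have [cr _] := Zb _ uvZ.
  have h : forall z, (z \in reach a) || (z \in reach b) -> z \in ucomp f r.
    by move=> z /orP[] h; [apply: child_reach_ucomp ra h|apply: child_reach_ucomp rb h].
  have uK : u \in ucomp f r by apply: h; case/orP: cr => /andP[-> _]; rewrite ?orbT.
  have vK : v \in ucomp f r by apply: h; case/orP: cr => /andP[_ ->]; rewrite ?orbT.
  by rewrite (ucomp_eq uK).
- move=> y0 z zy.
  have sub : f \subset Mf by exact: subsetUl.
  by have := subsetP (ucomp_mono y0 sub) z zy; rewrite in_ucomp.
Qed.

Lemma Mf_nice : nice Mf.
Proof.
split.
  move=> u v; rewrite /Mf /merge_subtrees in_setU => /orP[]; first exact: finc.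
  case/bigcupP => r /andP[rt s2] uvZ.
  by have [a [b [_ _ _ _ [Zb _]]]] := Zr_prop rt s2; have [] := Zb _ uvZ.
have subM : f \subset Mf by exact: subsetUl.
move=> x y; rewrite Mf_ucomp => a.
have [r rt xr] := root_ex x.
have Kx := ucomp_eq xr.
rewrite Kx in a; have /adjP[_ yK xy H] := a.
case: (root_decomp rt xr) => [e|[c rc xc]].
  subst x; apply: (subsetP subM).
  case: (root_decomp rt yK) => [e|[c rc yc]]; first by subst y; rewrite ltxx in xy.
  have cs : c \in outs A f r by rewrite mem_outs.
  case E: (outs A f r) cs => [|a0 t] // cs.
  have a0f : (r, a0) \in f by rewrite -mem_outs E mem_head.
  have a0c : A a0 <= A c.
    move: cs; rewrite in_cons => /orP[/eqP -> //|ct].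
    have := outs_sorted f r; rewrite E => /(order_path_min leA_trans) /allP.
    by move/(_ _ ct).
  have cy : A c <= A y by apply: conn_le; rewrite -in_reach.
  case: (eqVneq y a0) => [->//|ne].
  have := H a0 (ucomp_arc a0f); rewrite (finc a0f) /=.
  by rewrite (A_le_lt _ (le_trans a0c cy)) // eq_sym.
have yr : y != r by apply: contraTneq xy => ->; rewrite ltNge (root_min rt xr).
case: (root_decomp rt yK) => [e|[c' rc' yc']]; first by rewrite e eqxx in yr.
have subK : forall d, (r, d) \in f -> {subset reach d <= ucomp f r}.
  by move=> d rd z zd; apply: child_reach_ucomp rd zd.
have nc : nonroot c by exists r.
case: (eqVneq c' c) => [e|ne].
  subst c'; apply: (subsetP subM).
  have a2 : adj (reach c) x y by apply: adj_sub a => //; apply: subK.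
  case: (pickP (fun d => (x, d) \in f)) => [d xd|nd].
    by have := reach_child nc xc xd; move/(adj_uniq a2) => ->.
  have := reach_leaf nc xc (fun d => negbT (nd d)) yc'.
  by rewrite leNgt xy.
have s2 : (size (outs A f r) == 2)%N.
  rewrite eqn_leq fout2 /=.
  have : {subset [:: c; c'] <= outs A f r}.
    by move=> z; rewrite !in_cons orbF => /orP[] /eqP ->; rewrite mem_outs.
  move/(uniq_leq_size _) => /=; rewrite in_cons orbF eq_sym ne => /(_ isT).
  done.
rewrite /Mf /merge_subtrees in_setU; apply/orP; right.
apply/bigcupP; exists r; first by rewrite rt s2.
have [a0 [b0 [E ra rb ab [_ Zm]]]] := Zr_prop rt s2.
have cin : c \in [:: a0; b0] by rewrite -E mem_outs.
have c'in : c' \in [:: a0; b0] by rewrite -E mem_outs.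
have sub : {subset reach a0 :|: reach b0 <= ucomp f r}.
  by move=> z; rewrite in_setU => /orP[] h; [apply: subK ra _ h|apply: subK rb _ h].
move: cin c'in; rewrite !in_cons !orbF => /orP[] /eqP ec /orP[] /eqP ec'; subst c c'.
- by rewrite eqxx in ne.
- apply: Zm; first by rewrite /cross xc yc'.
  by apply: adj_sub a; rewrite ?in_setU ?xc ?yc' ?orbT.
- apply: Zm; first by rewrite /cross xc yc' orbT.
  by apply: adj_sub a; rewrite ?in_setU ?xc ?yc' ?orbT.
- by rewrite eqxx in ne.
Qed.

End Forest.

Definition nbr (w x : 'I_n) := ((val x == (val w).+1 %% n) || (val w == (val x).+1 %% n))%N.

Lemma corr_inc u v : (u, v) \in corr_graph A -> A u < A v.
Proof. by rewrite inE => /and3P[]. Qed.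

Lemma corr_nb u v : (u, v) \in corr_graph A -> nbr u v /\ nbr v u.
Proof. by rewrite inE /= => /and3P[h _ _]; split; rewrite /nbr // orbC. Qed.

Lemma modS_inj (a b : 'I_n) : ((val a).+1 %% n = (val b).+1 %% n)%N -> a = b.
Proof.
move=> h; apply: val_inj.
have E : forall x, (x < n)%N -> (x.+1 %% n = if x.+1 == n then 0 else x.+1)%N.
  move=> x hx; case: eqP => [->|ne]; first by rewrite modnn.
  by rewrite modn_small // ltn_neqAle hx andbT; apply/eqP.
move: h; rewrite !E ?ltn_ord //.
have ha := ltn_ord a; have hb := ltn_ord b.
by case: ifP => /eqP h1; case: ifP => /eqP h2; lia.
Qed.

Lemma nbr3 w a b c : nbr w a -> nbr w b -> nbr w c -> a != b -> a != c -> b != c -> False.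
Proof.
have t1 : forall x y : 'I_n, (val x == (val w).+1 %% n)%N -> (val y == (val w).+1 %% n)%N -> x = y.
  by move=> x y /eqP hx /eqP hy; apply: val_inj; rewrite hx hy.
have t2 : forall x y : 'I_n, (val w == (val x).+1 %% n)%N -> (val w == (val y).+1 %% n)%N -> x = y.
  by move=> x y /eqP hx /eqP hy; apply: modS_inj; rewrite -hx -hy.
rewrite /nbr => /orP[ha|ha] /orP[hb|hb] /orP[hc|hc] ab ac bc.
all: first [ by rewrite (t1 _ _ ha hb) eqxx in ab
           | by rewrite (t1 _ _ ha hc) eqxx in ac
           | by rewrite (t1 _ _ hb hc) eqxx in bc
           | by rewrite (t2 _ _ ha hb) eqxx in ab
           | by rewrite (t2 _ _ ha hc) eqxx in ac
           | by rewrite (t2 _ _ hb hc) eqxx in bc ].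
Qed.

Section Main.
Variable vis : seq 'I_n.
Let F := dfs_forest A (corr_graph A) vis.

Lemma F_sub : F \subset corr_graph A.
Proof. by have [] := dfs_prop (corr_graph A) vis. Qed.

Lemma F_inc u v : (u, v) \in F -> A u < A v.
Proof. by move=> h; apply: corr_inc; apply: (subsetP F_sub). Qed.

Lemma F_ind a a' b : (a, b) \in F -> (a', b) \in F -> a = a'.
Proof. by have [_] := dfs_prop (corr_graph A) vis; apply. Qed.

Lemma F_out u w c1 c2 : (u, w) \in F -> (w, c1) \in F -> (w, c2) \in F -> c1 = c2.
Proof.
move=> uw wc1 wc2; case: (eqVneq c1 c2) => // ne; exfalso.
have [_ h1] := corr_nb (subsetP F_sub _ uw).
have [h2 _] := corr_nb (subsetP F_sub _ wc1).
have [h3 _] := corr_nb (subsetP F_sub _ wc2).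
have i1 := F_inc uw; have i2 := F_inc wc1; have i3 := F_inc wc2.
apply: (nbr3 h1 h2 h3) => //.
- by apply: A_lt_neq; exact: lt_trans i1 i2.
- by apply: A_lt_neq; exact: lt_trans i1 i3.
Qed.

Lemma F_out2 r : (size (outs A F r) <= 2)%N.
Proof.
have u := outs_uniq F r.
case E: (outs A F r) u => [|a [|b [|c t]]] //= u.
exfalso; move: u; rewrite !in_cons !negb_or => /and4P[/and3P[ab ac _] /andP[bc _] _ _].
have nb : forall x, x \in outs A F r -> nbr r x.
  by move=> x; rewrite mem_outs => /(subsetP F_sub) /corr_nb [].
by apply: (nbr3 (nb a _) (nb b _) (nb c _)) => //; rewrite E !in_cons eqxx ?orbT.
Qed.

End Main.

Lemma main_sec vis rs :
  let F := dfs_forest A (corr_graph A) vis in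
  perm_eq rs (enum (forest_roots F)) ->
  let HR := merge_step A (merge_subtrees A F) rs in
  let F' := dfs_forest A HR.1 HR.2 in
  forall x : 'I_n, is_dpath F' (ucomp F' x).
Proof.
move=> F hrs HR F' x.
have h1 := @F_inc vis; have h2 := @F_ind vis; have h3 := @F_out vis; have h4 := @F_out2 vis.
have nM : nice (merge_subtrees A F) := Mf_nice h1 h2 h3 h4.
have UM : forall y, ucomp (merge_subtrees A F) y = ucomp F y := Mf_ucomp h1 h2 h3.
have memrs : forall r, (r \in rs) = (r \in forest_roots F).
  by move=> r; rewrite (perm_mem hrs) mem_enum.
have okM : rs_ok (merge_subtrees A F) rs.
  split.
  - by rewrite (perm_uniq hrs) enum_uniq.
  - by move=> r; rewrite memrs UM => rt z; apply: root_min.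
  - by move=> r1 r2; rewrite !memrs UM; apply: root_uniq.
have covM : forall y, covered (merge_subtrees A F) rs y.
  move=> y; have [r rt yr] := root_ex h1 y.
  by apply/hasP; exists r; rewrite ?memrs ?UM.
have [nH okH covH _ _] := merge_step_ok nM okM.
have cov' : forall y, covered HR.1 HR.2 y by move=> y; rewrite -covH covM.
rewrite /F' (dfs_nice nH okH cov').
exact: dpath_nice.
Qed.

End P1.

Unset Implicit Arguments.
Set Strict Implicit.

Theorem lemma2 (R : realType) (n : nat) (A : 'I_n -> R) (vis rs : seq 'I_n) :
  injective A ->
  perm_eq vis (enum 'I_n) ->
  let F := dfs_forest A (corr_graph A) vis in
  perm_eq rs (enum (forest_roots F)) ->
  let HR := merge_step A (merge_subtrees A F) rs in
  let F' := dfs_forest A HR.1 HR.2 in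
  forall x : 'I_n, is_dpath F' (ucomp F' x).
Proof.
move=> Ainj _; exact: main_sec.
Qed.
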